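(* For $n\ge1$, \begin{align*} \left|\Pi_n\wr C_2(1^11^1,1^12^2)\right|&=\sum_{j\geq 0}\sum_{i=1}^n \binom{i-1}{j}\binom{n-i}{j}j! +\sum_{j\geq 0} \sum_{i=2}^n(i-1)\binom{i-2}{j}\binom{n-i}{j}j!\\ &\quad+ \sum_{j\geq 0}\sum_{i=1}^{n-1}\binom{i-1}{j}\binom{n-i-1}{j}j!+1. \end{align*}
   Context: For $n\ge0$ let $[n]=\{1,\dots,n\}$. A $2$-colored set partition of $[n]$ is a set partition of $[n]$ together with an assignment of a color from $\{1,2\}$ to each element; $\Pi_n\wr C_2$ is the set of these. For a set $S$ of patterns, $\Pi_n\wr C_2(S)$ is the set of such colored partitions avoiding every pattern in $S$ in the pattern sense. For the patterns used here: $\sigma$ contains $1^11^1$ iff two elements in the same block have the same color; $\sigma$ contains $1^12^2$ iff there are $i<j$ in different blocks with $i$ colored $1$ and $j$ colored $2$. Binomial coefficients $\binom{a}{b}$ with $b>a$ or $a<0$ are $0$. *)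

(* Defs.v *)
From mathcomp Require Import all_boot.
Set Implicit Arguments. Unset Strict Implicit. Unset Printing Implicit Defensive.

(* Ground set [n] = {1,...,n} is modelled by 'I_n = {0,...,n-1} (element k+1
   is represented by k; the order is preserved). *)
Definition color := 'I_2.
Definition col1 : color := @Ordinal 2 0 isT.
Definition col2 : color := @Ordinal 2 1 isT.

Definition colored_partition (n : nat) :=
  ({set {set 'I_n}} * {ffun 'I_n -> color})%type.

Definition is_colored_set_partition n (s : colored_partition n) : bool :=
  partition s.1 [set: 'I_n].

Definition same_block n (P : {set {set 'I_n}}) (x y : 'I_n) : bool :=
  [exists B in P, (x \in B) && (y \in B)].

Definition contains_11_11 n (s : colored_partition n) : bool :=
  [exists x : 'I_n, exists y : 'I_n,
     [&& x < y, same_block s.1 x y & s.2 x == s.2 y]].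

Definition contains_11_22 n (s : colored_partition n) : bool :=
  [exists i : 'I_n, exists j : 'I_n,
     [&& i < j, ~~ same_block s.1 i j, s.2 i == col1 & s.2 j == col2]].

Definition avoiders (n : nat) : {set colored_partition n} :=
  [set s | [&& is_colored_set_partition s, ~~ contains_11_11 s
            & ~~ contains_11_22 s]].

(* Main.v *)
Require Import Defs.
From mathcomp Require Import all_boot zify.
Set Implicit Arguments. Unset Strict Implicit. Unset Printing Implicit Defensive.

Fixpoint F (p q : nat) : nat :=
  match p with 0 => 1 | p'.+1 => F p' q + q * F p' q.-1 end.

Lemma F_closed p q N : p < N -> F p q = \sum_(j < N) 'C(p, j) * 'C(q, j) * j`!.
Proof.
elim: p q N => [|p IH] q [|N] //= hN.
  rewrite big_ord_recl /= !bin0 fact0 big1 // => j _.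
rewrite big_ord_recl /= !bin0 fact0.
under eq_bigr => j _ do rewrite /bump /= add1n binS mulnDl mulnDl.
rewrite big_split /= addnA.
have -> : 1 * 1 * 1 + \sum_(i < N) 'C(p, i.+1) * 'C(q, i.+1) * i.+1`!
   = F p q by rewrite (IH q N.+1 (ltnW hN)) big_ord_recl /= !bin0 fact0.
congr (_ + _); rewrite (IH q.-1 N); last by lia.
rewrite big_distrr /=.
apply: eq_bigr => j _.
have := mul_bin_diag q j; rewrite factS.
move: ('C(p, j)) ('C(q.-1, j)) ('C(q, j.+1)) (j`!) => a b c f h.
transitivity (a * f * (q * b)); first by lia.
by rewrite h; lia.
Qed.

Lemma F_sym p q : F p q = F q p.
Proof.
rewrite (@F_closed p q (p + q).+1); last lia.
rewrite (@F_closed q p (p + q).+1); last lia.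
by apply: eq_bigr => j _; rewrite (mulnC 'C(p, j)).
Qed.

Lemma F_recq p q : F p q.+1 = F p q + p * F p.-1 q.
Proof. by rewrite F_sym /= [F q p]F_sym [F q p.-1]F_sym. Qed.

Lemma F_p0 p : F p 0 = 1.
Proof. by elim: p => //= p ->. Qed.

Lemma algebra n :
  \sum_(p < n.+1) F p (n - p) + \sum_(p < n.-1) F p (n - p.+2) =
    \sum_(0 <= j < n.+1) \sum_(1 <= i < n.+1) 'C(i - 1, j) * 'C(n - i, j) * j`!
  + \sum_(0 <= j < n.+1) \sum_(2 <= i < n.+1) (i - 1) * 'C(i - 2, j) * 'C(n - i, j) * j`!
  + \sum_(0 <= j < n.+1) \sum_(1 <= i < n) 'C(i - 1, j) * 'C(n - i - 1, j) * j`!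
  + 1.
Proof.
rewrite [X in _ = X + _ + _ + _]exchange_big [X in _ = _ + X + _ + _]exchange_big.
rewrite [X in _ = _ + _ + X + _]exchange_big /=.
rewrite !big_add1 /=.
have E3 : \sum_(p < n.-1) F p (n - p.+2) =
  \sum_(0 <= i < n.-1) \sum_(0 <= j < n.+1) 'C(i.+1 - 1, j) * 'C(n - i.+1 - 1, j) * j`!.
  rewrite big_mkord; apply: eq_bigr => i _; rewrite big_mkord (@F_closed _ _ n.+1).
    by apply: eq_bigr => j _; rewrite subSS subn0 -subnDA addn1.
  by case: i => i /=; lia.
rewrite E3 addnAC; congr (_ + _).
rewrite big_ord_recr /= subnn F_p0; congr (_ + _).
case: n {E3} => [|n]; first by rewrite big_ord0 !big_geq.
have E : forall p : 'I_n.+1, F p (n.+1 - p) = F p (n.+1 - p.+1) + p * F p.-1 (n.+1 - p.+1).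
  move=> [p hp] /=; rewrite -F_recq; congr F; lia.
under eq_bigr => p _ do rewrite E.
rewrite big_split /=; congr (_ + _).
  rewrite big_mkord; apply: eq_bigr => i _.
  rewrite (@F_closed _ _ n.+2); last by case: i => i /=; lia.
  rewrite big_mkord; apply: eq_bigr => j _.
  by rewrite subn1.
rewrite big_ord_recl /= mul0n add0n big_mkord; apply: eq_bigr => i _.
rewrite (@F_closed _ _ n.+2); last by case: i => i /=; lia.
rewrite big_mkord big_distrr; apply: eq_bigr => j _.
by rewrite /bump /= add1n !subSS !subn0 !mulnA.
Qed.

Definition matching (T : finType) (M : {set T * T}) : bool :=
  [forall m1 in M, forall m2 in M, ((m1.1 == m2.1) || (m1.2 == m2.2)) ==> (m1 == m2)].

Definition matchings (T : finType) (X Y : {set T}) : {set {set T * T}} :=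
  [set M : {set T * T} | (M \subset setX X Y) && matching M].

Lemma matchingP (T : finType) (M : {set T * T}) :
  reflect (forall m1 m2, m1 \in M -> m2 \in M ->
             (m1.1 == m2.1) || (m1.2 == m2.2) -> m1 = m2) (matching M).
Proof.
apply: (iffP forall_inP) => [h m1 m2 h1 h2 e | h m1 h1].
  by move/forall_inP: (h m1 h1) => /(_ m2 h2) /implyP /(_ e) /eqP.
by apply/forall_inP => m2 h2; apply/implyP => e; apply/eqP; apply: h.
Qed.

Lemma card_matchings (T : finType) p : forall (X Y : {set T}),
  #|X| = p -> #|matchings X Y| = F p #|Y|.
Proof.
elim: p => [|p IH] X Y hX.
  move/eqP: hX; rewrite cards_eq0 => /eqP ->.
  have -> : matchings set0 Y = [set set0].
    apply/setP => M; rewrite !inE.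
    apply/andP/eqP => [[hs _] | ->]; last first.
      by split; [apply: sub0set | apply/matchingP => m1 m2; rewrite inE].
    apply/setP => m; rewrite inE; apply/negbTE/negP => hm.
    by move: (subsetP hs m hm); rewrite inE => /andP[]; rewrite inE.
  by rewrite cards1.
have : 0 < #|X| by rewrite hX.
rewrite card_gt0 => /set0Pn [x0 hx0].
set X' := X :\ x0.
have hX' : #|X'| = p by move: hX; rewrite (cardsD1 x0) hx0 add1n => -[].
set S := matchings X Y.
pose has0 (M : {set T * T}) := [exists y, (x0, y) \in M].
rewrite -sum1_card (bigID has0) /= addnC /=.
have -> : \sum_(M in S | ~~ has0 M) 1 = #|matchings X' Y|.
  rewrite -sum1_card; apply: eq_bigl => M; rewrite !inE.
  apply/idP/idP.
    move=> /andP[/andP[hs hm] h0]; rewrite hm andbT.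
    apply/subsetP => m hm'; move: (subsetP hs m hm'); rewrite !inE => /andP[-> ->].
    suff -> : m.1 != x0 by [].
    apply/eqP => e; move/negP: h0; apply; apply/existsP.
    by exists m.2; rewrite -e -surjective_pairing.
  move=> /andP[hs hm]; rewrite hm andbT; apply/andP; split.
    apply/subsetP => m hm'; move: (subsetP hs m hm'); rewrite !inE.
    by move=> /andP[/andP[_ ->] ->].
  apply/negP => /existsP [y hy]; move: (subsetP hs _ hy); rewrite !inE /=.
  by rewrite eqxx.
rewrite IH //; congr (_ + _).
pose g (M : {set T * T}) := odflt x0 [pick y | (x0, y) \in M].
rewrite (partition_big g (fun y => y \in Y)); last first.
  move=> M /andP[]; rewrite inE => /andP[hs _] /existsP[y hy].
  rewrite /g; case: pickP => [y' hy' | /(_ y)]; last by rewrite hy.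
  by move: (subsetP hs _ hy'); rewrite inE => /andP[].
rewrite /= -sum_nat_const; apply: eq_bigr => y hy.
have -> : \sum_(M | (M \in S) && has0 M && (g M == y)) 1 =
          #|[set M in S | (x0, y) \in M]|.
  rewrite -sum1_card; apply: eq_bigl => M; rewrite [in RHS]inE.
  have gE : forall y0, (M \in S) -> (x0, y0) \in M -> g M = y0.
    move=> y0; rewrite inE => /andP[_ /matchingP hm] hxy; rewrite /g.
    case: pickP => [y' hy' | /(_ y0)]; last by rewrite hxy.
    by have := hm _ _ hy' hxy; rewrite eqxx => /(_ isT) [->].
  apply/idP/idP.
    move=> /andP[/andP[hS /existsP[y' hy']] /eqP hg].
    by have e := gE _ hS hy'; rewrite hg in e; rewrite hS e.
  move=> /andP[hS hxy]; rewrite hS (gE _ hS hxy) eqxx andbT /=.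
  by apply/existsP; exists y.
set D := matchings X' (Y :\ y).
pose f (N : {set T * T}) := (x0, y) |: N.
have notin : forall N, N \in D -> (x0, y) \notin N.
  move=> N; rewrite inE => /andP[hs _]; apply/negP => h.
  by move: (subsetP hs _ h); rewrite !inE /= eqxx.
have -> : [set M in S | (x0, y) \in M] = f @: D.
  apply/setP => M; rewrite inE; apply/andP/imsetP.
    move=> [hS hxy]; exists (M :\ (x0, y)); last by rewrite /f setD1K.
    move: hS; rewrite !inE => /andP[hs hm]; apply/andP; split.
      apply/subsetP => m; rewrite !inE => /andP[hne hm'].
      move: (subsetP hs m hm'); rewrite !inE => /andP[-> ->]; rewrite !andbT.
      move/matchingP: hm => hm.
      apply/andP; split; apply/negP => /eqP e; move/eqP: hne; apply;
        apply: hm => //; by rewrite e eqxx ?orbT.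
    apply/matchingP => m1 m2; rewrite !inE => /andP[_ h1] /andP[_ h2].
    by move/matchingP: hm; apply.
  move=> [N hN ->]; split; last by rewrite /f setU11.
  move: (hN); rewrite !inE => /andP[hs /matchingP hm]; apply/andP; split.
    apply/subsetP => m; rewrite !inE => /orP[/eqP -> | hm'] /=.
      by rewrite hx0 hy.
    by move: (subsetP hs m hm'); rewrite !inE => /andP[/andP[_ ->] /andP[_ ->]].
  have hNp : forall m, m \in N -> (m.1 != x0) && (m.2 != y).
    by move=> m hm'; move: (subsetP hs m hm'); rewrite !inE => /andP[/andP[-> _] /andP[-> _]].
  apply/matchingP => m1 m2; rewrite !inE => /orP[/eqP -> | h1] /orP[/eqP -> | h2] //=.
  - by move: (hNp _ h2) => /andP[/negbTE a /negbTE b]; rewrite eq_sym a eq_sym b.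
  - by move: (hNp _ h1) => /andP[/negbTE a /negbTE b]; rewrite a b.
  - exact: hm.
rewrite card_in_imset; last first.
  move=> N1 N2 h1 h2 e; rewrite -(setU1K (notin _ h1)) -(setU1K (notin _ h2)).
  by rewrite /f in e; rewrite e.
by rewrite IH // (cardsD1 y Y) hy.
Qed.

Section StructS.
Variable n : nat.
Implicit Types (P : {set {set 'I_n}}) (c : {ffun 'I_n -> color}) (x y z : 'I_n).

Lemma sbE P x y : partition P setT -> same_block P x y = (y \in pblock P x).
Proof.
move=> hP; have [/eqP hc ht _] := and3P hP.
apply/existsP/idP => [[B /andP[hB /andP[hx hy]]] | h].
  by rewrite (def_pblock ht hB hx).
have hx : x \in cover P by rewrite hc inE.
by exists (pblock P x); rewrite pblock_mem // mem_pblock hx h.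
Qed.

Lemma sb_eqr P : partition P setT -> forall x y z,
  same_block P z z * (same_block P x y -> same_block P x z = same_block P y z).
Proof.
move=> hP x y z; rewrite !sbE //.
have := pblock_equivalence hP; rewrite /prop_in3 /= => h.
by apply: h; rewrite inE.
Qed.

Lemma sb_refl P x : partition P setT -> same_block P x x.
Proof. by move=> hP; have [] := sb_eqr hP x x x. Qed.

Lemma sb_sym P x y : partition P setT -> same_block P x y -> same_block P y x.
Proof.
move=> hP h; have [_ e] := sb_eqr hP x y x.
by rewrite -(e h) sb_refl.
Qed.

Lemma sb_trans P x y z : partition P setT ->
  same_block P x y -> same_block P y z -> same_block P x z.
Proof.
move=> hP h1 h2; have [_ e] := sb_eqr hP x y z.
by rewrite (e h1).
Qed.

Lemma col_other (a b d : color) : a != b -> a != d -> b = d.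
Proof.
case: a b d => [a ha] [b hb] [d hd]; rewrite -!val_eqE /= => h1 h2.
apply: val_inj => /=; lia.
Qed.

Definition fr c x y : bool :=
  ((x < y) && (c x == col1) && (c y == col2)) ||
  ((y < x) && (c y == col1) && (c x == col2)).

Lemma fr_sym c x y : fr c x y = fr c y x.
Proof. by rewrite /fr orbC. Qed.

Lemma fr_col c x y : fr c x y -> c x != c y.
Proof.
by rewrite /fr => /orP[/andP[/andP[_ /eqP->] /eqP->] | /andP[/andP[_ /eqP->] /eqP->]].
Qed.

Lemma fr_neq c x y : fr c x y -> x != y.
Proof. by move/fr_col; apply: contraNneq => ->. Qed.

Definition Xs c := [set x | (c x == col2) && [forall y, ~~ fr c x y]].
Definition Ys c := [set x | (c x == col1) && [forall y, ~~ fr c x y]].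

Definition Pc c := [set P | (P, c) \in avoiders n].

Lemma PcE P c : (P \in Pc c) = ((P, c) \in avoiders n).
Proof. by rewrite /Pc in_set. Qed.

Lemma av_part P c : (P, c) \in avoiders n -> partition P setT.
Proof. by rewrite inE => /andP[]. Qed.

Lemma av11 P c x y : (P, c) \in avoiders n -> x != y -> same_block P x y -> c x != c y.
Proof.
rewrite inE => /and3P[hP h11 _] hne hsb; apply/negP => /eqP e.
move/negP: h11; apply; apply/existsP.
case: (ltngtP x y) => [lt | gt | /val_inj eq]; last by rewrite eq eqxx in hne.
  by exists x; apply/existsP; exists y; rewrite lt hsb e eqxx.
by exists y; apply/existsP; exists x; rewrite gt (sb_sym hP hsb) e eqxx.
Qed.

Lemma av12 P c x y : (P, c) \in avoiders n -> fr c x y -> same_block P x y.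
Proof.
rewrite inE => /and3P[hP _ h12].
have H : forall i j : 'I_n, (i < j) && (c i == col1) && (c j == col2) -> same_block P i j.
  move=> i j /andP[/andP[lt h1] h2]; apply: contraNT h12 => hn.
  apply/existsP; exists i; apply/existsP; exists j.
  by rewrite lt hn h1 h2.
by case/orP => /H // h; apply: sb_sym.
Qed.

Definition phi c P : {set 'I_n * 'I_n} :=
  [set m in setX (Xs c) (Ys c) | same_block P m.1 m.2].

Definition Rm c (M : {set 'I_n * 'I_n}) x y : bool :=
  (x == y) || ((x, y) \in M) || ((y, x) \in M) || fr c x y.

Definition psi c M : {set {set 'I_n}} := equivalence_partition (Rm c M) setT.

Lemma XsE c x : (x \in Xs c) = (c x == col2) && [forall y, ~~ fr c x y].
Proof. by rewrite inE. Qed.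
Lemma YsE c x : (x \in Ys c) = (c x == col1) && [forall y, ~~ fr c x y].
Proof. by rewrite inE. Qed.

Lemma noFrX c x y : x \in Xs c -> fr c x y = false.
Proof. by rewrite XsE => /andP[_ /forallP /(_ y) /negbTE]. Qed.
Lemma noFrY c x y : x \in Ys c -> fr c x y = false.
Proof. by rewrite YsE => /andP[_ /forallP /(_ y) /negbTE]. Qed.
Lemma XnY c x : x \in Xs c -> x \in Ys c -> False.
Proof. by rewrite XsE YsE => /andP[/eqP -> _] /andP[]. Qed.

Lemma key P c x y : (P, c) \in avoiders n ->
  same_block P x y = Rm c (phi c P) x y.
Proof.
move=> hav; have hP := av_part hav.
apply/idP/idP; last first.
  rewrite /Rm !inE /= => /orP[/orP[/orP[/eqP -> | /andP[_ h]] | /andP[_ h]] | h].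
  - exact: sb_refl.
  - exact: h.
  - exact: sb_sym.
  - exact: av12 hav h.
move=> hsb; rewrite /Rm; case: (eqVneq x y) => //= hne.
have hcol := av11 hav hne hsb.
have forced : forall u v, same_block P u v -> u != v -> c u != c v ->
   forall w, fr c u w -> fr c u v.
  move=> u v huv huv' hc w hw.
  case: (eqVneq w v) => [<- // | hwv].
  have h1 := av12 hav hw.
  have h2 : same_block P v w by apply: sb_trans hP (sb_sym hP huv) h1.
  have : c v != c w by apply: av11 hav _ h2; rewrite eq_sym.
  by rewrite (col_other hc (fr_col hw)) eqxx.
case: (boolP [exists w, fr c x w]) => [/existsP[w hw] | hnx].
  by rewrite (forced x y hsb hne hcol w hw) !orbT.
case: (boolP [exists w, fr c y w]) => [/existsP[w hw] | hny].
  by rewrite fr_sym (forced y x (sb_sym hP hsb) _ _ w hw) ?orbT // eq_sym.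
rewrite negb_exists in hnx; rewrite negb_exists in hny.
rewrite !inE /= hsb (sb_sym hP hsb) !andbT.
case: (c x =P col2) => hx.
  have hy : c y == col1.
    by apply/eqP; apply: (@col_other col2) => //; rewrite -hx.
  by rewrite hnx hy hny.
have hx1 : c x == col1.
  by apply/eqP; apply: (@col_other col2) => //; apply/eqP => e; apply: hx; rewrite e.
have hy : c y == col2.
  by apply/eqP/esym; apply: (@col_other col1) => //; rewrite -(eqP hx1).
by rewrite hx1 hnx hy hny /= ?orbT.
Qed.


Lemma phi_in P c : (P, c) \in avoiders n -> phi c P \in matchings (Xs c) (Ys c).
Proof.
move=> hav; have hP := av_part hav.
rewrite inE; apply/andP; split.
  by apply/subsetP => m; rewrite inE => /andP[].
apply/matchingP => [[x1 y1] [x2 y2]]; rewrite !inE /=.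
move=> /andP[/andP[hx1 hy1] h1] /andP[/andP[hx2 hy2] h2] /orP[/eqP e | /eqP e].
  rewrite e in h1 *; case: (eqVneq y1 y2) => [-> // | hne].
  have := av11 hav hne (sb_trans hP (sb_sym hP h1) h2).
  by case/andP: hy1 => /eqP -> _; case/andP: hy2 => /eqP -> _.
rewrite e in h1 *; case: (eqVneq x1 x2) => [-> // | hne].
have := av11 hav hne (sb_trans hP h1 (sb_sym hP h2)).
by case/andP: hx1 => /eqP -> _; case/andP: hx2 => /eqP -> _.
Qed.

Lemma Rm_sym c M x y : Rm c M x y = Rm c M y x.
Proof.
rewrite /Rm eq_sym fr_sym; case: (y == x) => //=.
by case: ((x, y) \in M); case: ((y, x) \in M).
Qed.

Section Psi.
Variable c : {ffun 'I_n -> color}.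
Hypothesis H1 : forall x y z, fr c x y -> fr c x z -> y = z.
Variable M : {set 'I_n * 'I_n}.
Hypothesis hM : M \in matchings (Xs c) (Ys c).

Lemma inM a b : (a, b) \in M -> (a \in Xs c) /\ (b \in Ys c).
Proof.
move: hM; rewrite inE => /andP[hs _] h.
by move: (subsetP hs _ h); rewrite inE => /andP[].
Qed.

Lemma Rm_uniq x y z : Rm c M x y -> Rm c M x z -> x != y -> x != z -> y = z.
Proof.
move: hM; rewrite inE => /andP[_ /matchingP hm].
rewrite /Rm => hxy hxz nxy nxz.
rewrite (negbTE nxy) /= in hxy; rewrite (negbTE nxz) /= in hxz.
case/orP: hxy => [/orP[a|a]|a]; case/orP: hxz => [/orP[b|b]|b].
- by have := hm _ _ a b; rewrite eqxx => /(_ isT) [->].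
- by case: (inM a) => hx _; case: (inM b) => _ hx'; case: (XnY hx hx').
- by case: (inM a) => hx _; rewrite noFrX in b.
- by case: (inM a) => _ hx; case: (inM b) => hx' _; case: (XnY hx' hx).
- by have := hm _ _ a b; rewrite eqxx orbT => /(_ isT) [->].
- by case: (inM a) => _ hx; rewrite noFrY in b.
- by case: (inM b) => hx _; rewrite noFrX in a.
- by case: (inM b) => _ hx; rewrite noFrY in a.
- exact: H1 a b.
Qed.

Lemma Rm_col x y : Rm c M x y -> x != y -> c x != c y.
Proof.
rewrite /Rm => h nxy; rewrite (negbTE nxy) /= in h.
case/orP: h => [/orP[a|a]|a]; last exact: fr_col.
  case: (inM a) => hx hy; rewrite XsE in hx; rewrite YsE in hy.
  by case/andP: hx => /eqP -> _; case/andP: hy => /eqP -> _.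
case: (inM a) => hy hx; rewrite XsE in hy; rewrite YsE in hx.
by case/andP: hx => /eqP -> _; case/andP: hy => /eqP -> _.
Qed.

Lemma Rm_eqr : {in setT & &, equivalence_rel (Rm c M)}.
Proof.
move=> x y z _ _ _; split; first by rewrite /Rm eqxx.
case: (eqVneq x y) => [-> // | nxy] hxy.
apply/idP/idP => h.
  case: (eqVneq x z) => [<- | nxz]; first by rewrite Rm_sym.
  by rewrite -(Rm_uniq hxy h nxy nxz) /Rm eqxx.
case: (eqVneq y z) => [<- // | nyz].
rewrite Rm_sym in hxy.
by rewrite -(Rm_uniq hxy h _ nyz) ?/Rm ?eqxx // eq_sym.
Qed.

Lemma psi_part : partition (psi c M) setT.
Proof. exact: equivalence_partitionP Rm_eqr. Qed.

Lemma sb_psi x y : same_block (psi c M) x y = Rm c M x y.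
Proof.
rewrite sbE ?psi_part //.
by rewrite /psi (pblock_equivalence_partition Rm_eqr) // inE.
Qed.

Lemma psi_in : psi c M \in Pc c.
Proof.
rewrite !inE /is_colored_set_partition psi_part /=; apply/andP; split.
  apply/existsP => [[x /existsP [y /and3P[lt sb e]]]].
  rewrite sb_psi in sb; have nxy : x != y by rewrite neq_ltn lt.
  by move: (Rm_col sb nxy); rewrite e.
apply/existsP => [[i /existsP [j /and4P[lt nsb h1 h2]]]].
rewrite sb_psi in nsb; move/negP: nsb; apply.
by rewrite /Rm /fr lt h1 h2 /= !orbT.
Qed.

Lemma phi_psi : phi c (psi c M) = M.
Proof.
apply/setP => [[x y]]; rewrite inE /= sb_psi.
apply/idP/idP.
  move=> /andP[]; rewrite inE /= => /andP[hx hy].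
  rewrite /Rm => /orP[/orP[/orP[/eqP e | //] | h] | h].
  - by rewrite e in hx; case: (XnY hx hy).
  - by case: (inM h) => hy' _; case: (XnY hy' hy).
  - by rewrite noFrX in h.
move=> h; case: (inM h) => hx hy; rewrite inE /= hx hy /=.
by rewrite /Rm h /= orbT.
Qed.

End Psi.

Lemma psi_phi P c : (P, c) \in avoiders n -> psi c (phi c P) = P.
Proof.
move=> hav; have hP := av_part hav.
rewrite -[RHS](equivalence_partition_pblock hP) /psi /equivalence_partition.
apply: eq_imset => x; apply/setP => y; rewrite !inE.
by rewrite -sbE // (key _ _ hav).
Qed.

Lemma card_Pc c : (forall x y z, fr c x y -> fr c x z -> y = z) ->
  #|Pc c| = #|matchings (Xs c) (Ys c)|.
Proof.
move=> H1.
have inj : {in Pc c &, injective (phi c)}.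
  move=> P1 P2; rewrite !PcE => h1 h2 e.
  by rewrite -(psi_phi h1) -(psi_phi h2) e.
rewrite -(card_in_imset inj); apply: eq_card => M; apply/imsetP/idP.
  by move=> [P hP ->]; rewrite PcE in hP; apply: phi_in.
move=> hM; exists (psi c M); first exact: psi_in.
by rewrite phi_psi.
Qed.

End StructS.

Lemma c12 : (col1 == col2) = false. Proof. by []. Qed.
Lemma c21 : (col2 == col1) = false. Proof. by []. Qed.

Lemma col12 (a : color) : a != col1 -> a = col2.
Proof. case: a => [[|[|a]] h] //= _; exact: val_inj. Qed.

Section FinalS.
Variable n : nat.

Lemma cardLt p : p <= n -> #|[set x : 'I_n | x < p]| = p.
Proof.
move=> hp.
have -> : [set x : 'I_n | x < p] = [set widen_ord hp y | y in [set: 'I_p]].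
  apply/setP => x; rewrite inE; apply/idP/imsetP => [h | [y _ ->]] //; last by case: y.
  by exists (Ordinal h) => //; apply: val_inj.
rewrite card_imset; first by rewrite cardsT card_ord.
by move=> a b /(congr1 val) e; apply: val_inj.
Qed.

Lemma cardGe p : p <= n -> #|[set x : 'I_n | p <= x]| = n - p.
Proof.
move=> hp; have := cardsC [set x : 'I_n | x < p]; rewrite cardLt // card_ord.
have -> : ~: [set x : 'I_n | x < p] = [set x : 'I_n | p <= x].
  by apply/setP => x; rewrite !inE -leqNgt.
lia.
Qed.

Lemma card_sum : #|avoiders n| = \sum_(c : {ffun 'I_n -> color}) #|Pc c|.
Proof.
rewrite -sum1_card (partition_big (fun s : colored_partition n => s.2) predT) //=.
apply: eq_bigr => c _.
have -> : \sum_(s in avoiders n | s.2 == c) 1 = #|[set s in avoiders n | s.2 == c]|.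
  by rewrite -sum1_card; apply: eq_bigl => s; rewrite [in RHS]in_set.
have -> : [set s in avoiders n | s.2 == c] = (fun P => (P, c)) @: Pc c.
  apply/setP => [[P c']]; rewrite in_set /=; apply/andP/imsetP.
    by move=> [h /eqP e]; rewrite e in h *; exists P => //; rewrite PcE.
  by move=> [P' h [-> ->]]; rewrite -PcE.
by rewrite card_imset // => P1 P2 [].
Qed.


Definition cA (p : nat) : {ffun 'I_n -> color} :=
  [ffun x : 'I_n => if x < p then col2 else col1].
Definition cB (p : nat) : {ffun 'I_n -> color} :=
  [ffun x : 'I_n => if (x < p) || (x == p.+1 :> nat) then col2 else col1].

Lemma classify (P : {set {set 'I_n}}) (c : {ffun 'I_n -> color}) : (P, c) \in avoiders n ->
  (exists p, p <= n /\ c = cA p) \/ (exists p, p.+2 <= n /\ c = cB p).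
Proof.
move=> hav; have hP := av_part hav.
have F1 : forall x y z : 'I_n, x < y -> y < z ->
    c x = col1 -> c y = col2 -> c z = col2 -> False.
  move=> x y z lxy lyz hx hy hz.
  have h1 : same_block P x y by apply: (@av12 n P c x y hav); rewrite /fr lxy hx hy !eqxx.
  have h2 : same_block P x z.
    by apply: (@av12 n P c x z hav); rewrite /fr (ltn_trans lxy lyz) hx hz !eqxx.
  have nyz : y != z by rewrite neq_ltn lyz.
  have := av11 hav nyz (sb_trans hP (sb_sym hP h1) h2).
  by rewrite hy hz eqxx.
have F2 : forall x y z : 'I_n, x < y -> y < z ->
    c x = col1 -> c y = col1 -> c z = col2 -> False.
  move=> x y z lxy lyz hx hy hz.
  have h1 : same_block P x z.
    by apply: (@av12 n P c x z hav); rewrite /fr (ltn_trans lxy lyz) hx hz !eqxx.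
  have h2 : same_block P y z by apply: (@av12 n P c y z hav); rewrite /fr lyz hy hz !eqxx.
  have nxy : x != y by rewrite neq_ltn lxy.
  have := av11 hav nxy (sb_trans hP h1 (sb_sym hP h2)).
  by rewrite hx hy eqxx.
pose Pk k := (k == n) || [exists x : 'I_n, (val x == k) && (c x == col1)].
have exP : exists k, Pk k by exists n; rewrite /Pk eqxx.
case: (ex_minnP exP) => p hp pmin.
have hpn : p <= n by apply: pmin; rewrite /Pk eqxx.
have below : forall x : 'I_n, x < p -> c x = col2.
  move=> x hx; apply: col12; apply/negP => /eqP e.
  have : p <= x by apply: pmin; rewrite /Pk; apply/orP; right; apply/existsP; exists x; rewrite eqxx e eqxx.
  by rewrite leqNgt hx.
have atp : forall x : 'I_n, val x = p -> c x = col1.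
  move=> x hx; move: hp; rewrite /Pk => /orP[/eqP e | /existsP[x' /andP[/eqP e /eqP h]]].
    by move: (ltn_ord x); rewrite hx e ltnn.
  by rewrite -h; congr (c _); apply: val_inj; rewrite hx e.
case: (boolP [exists b : 'I_n, (p < b) && (c b == col2)]) => [/existsP[b /andP[pb /eqP cb]] | hno].
  right; exists p.
  have pn : p < n by exact: (ltn_trans pb (ltn_ord b)).
  pose x0 := Ordinal pn.
  have cx0 : c x0 = col1 by apply: atp.
  have bE : val b = p.+1.
    apply/eqP; rewrite eqn_leq pb andbT; rewrite leqNgt; apply/negP => hlt.
    have hy : p.+1 < n by exact: (ltn_trans hlt (ltn_ord b)).
    pose y := Ordinal hy.
    case: (eqVneq (c y) col1) => [e | /col12 e].
      by apply: (F2 x0 y b) => //=.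
    by apply: (F1 x0 y b) => //=.
  split; first by rewrite -bE ltn_ord.
  apply/ffunP => x; rewrite ffunE.
  case: (ltngtP x p) => [hx | hx | hx] /=.
  - by rewrite below.
  - case: (eqVneq (val x) p.+1) => [e | ne] /=.
      by rewrite -cb; congr (c _); apply: val_inj; rewrite e bE.
    have hx' : p.+1 < x by rewrite ltn_neqAle eq_sym ne hx.
    case: (eqVneq (c x) col1) => [// | /col12 e].
    by case: (F1 x0 b x) => //=; rewrite bE.
  - by rewrite atp // hx; case: ifP => // /eqP; lia.
left; exists p; split => //.
apply/ffunP => x; rewrite ffunE.
case: ifP => hx; first exact: below.
case: (eqVneq (c x) col1) => [// | /col12 e].
case: (eqVneq (val x) p) => [ex | nx]; first by rewrite atp in e.
case/negP: hno; apply/existsP; exists x; rewrite e eqxx andbT.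
by rewrite ltn_neqAle eq_sym nx leqNgt hx.
Qed.


Lemma frA p (x y : 'I_n) : fr (cA p) x y = false.
Proof.
rewrite /fr !ffunE.
case: ifP => hx; case: ifP => hy; rewrite ?c12 ?c21 ?eqxx ?andbF ?andbT //=; lia.
Qed.

Lemma XsA p : Xs (cA p) = [set x : 'I_n | x < p].
Proof.
apply/setP => x; rewrite XsE !inE ffunE.
have -> : [forall y, ~~ fr (cA p) x y] by apply/forallP => y; rewrite frA.
by case: ifP; rewrite ?c12.
Qed.

Lemma YsA p : Ys (cA p) = [set x : 'I_n | p <= x].
Proof.
apply/setP => x; rewrite YsE !inE ffunE.
have -> : [forall y, ~~ fr (cA p) x y] by apply/forallP => y; rewrite frA.
by case: ifP => h; rewrite ?c21 ?eqxx /=; lia.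
Qed.

Lemma frB p (x y : 'I_n) : fr (cB p) x y =
  ((x == p :> nat) && (y == p.+1 :> nat)) || ((x == p.+1 :> nat) && (y == p :> nat)).
Proof.
rewrite /fr !ffunE.
case: ifP => hx; case: ifP => hy; rewrite ?c12 ?c21 ?eqxx ?andbF ?andbT //=; lia.
Qed.

Lemma XsB p : Xs (cB p) = [set x : 'I_n | x < p].
Proof.
apply/setP => x; rewrite XsE !inE ffunE.
case: ifP => h; rewrite ?c12 ?eqxx /=.
  case: (ltnP x p) => hxp.
    by apply/forallP => y; rewrite frB; lia.
  have hx : nat_of_ord x = p.+1 by lia.
  have hpn : p < n by move: (ltn_ord x); lia.
  apply/negP => /forallP /(_ (Ordinal hpn)); rewrite frB /=; lia.
lia.
Qed.

Lemma YsB p : p.+2 <= n -> Ys (cB p) = [set x : 'I_n | p.+2 <= x].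
Proof.
move=> hp; apply/setP => x; rewrite YsE !inE ffunE.
case: ifP => h; rewrite ?c21 ?eqxx ?andFb ?andTb; first by lia.
case: (eqVneq (nat_of_ord x) p) => hxp.
  have hp1 : p.+1 < n by lia.
  have -> : [forall y, ~~ fr (cB p) x y] = false.
    apply/negbTE/negP => /forallP /(_ (Ordinal hp1)); rewrite frB /=; lia.
  lia.
have -> : [forall y, ~~ fr (cB p) x y] by apply/forallP => y; rewrite frB; lia.
lia.
Qed.

Lemma H1A p (x y z : 'I_n) : fr (cA p) x y -> fr (cA p) x z -> y = z.
Proof. by rewrite frA. Qed.

Lemma H1B p (x y z : 'I_n) : fr (cB p) x y -> fr (cB p) x z -> y = z.
Proof. rewrite !frB => h1 h2; apply: val_inj => /=; lia. Qed.

Lemma countA p : p <= n -> #|Pc (cA p)| = F p (n - p).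
Proof.
move=> hp; rewrite (card_Pc (@H1A p)) (@card_matchings _ p).
  by rewrite YsA cardGe.
by rewrite XsA cardLt.
Qed.

Lemma countB p : p.+2 <= n -> #|Pc (cB p)| = F p (n - p.+2).
Proof.
move=> hp; rewrite (card_Pc (@H1B p)) (@card_matchings _ p).
  by rewrite YsB // cardGe.
by rewrite XsB cardLt //; lia.
Qed.


Lemma col12n : col1 <> col2. Proof. by move/(congr1 val). Qed.

Lemma cA_inj p1 p2 : p1 <= n -> p2 <= n -> cA p1 = cA p2 -> p1 = p2.
Proof.
move=> h1 h2 e.
have key : forall a b, a <= n -> b <= n -> cA a = cA b -> a < b -> False.
  move=> a b ha hb eab lt.
  have han : a < n by apply: leq_trans lt hb.
  have := congr1 (fun f : {ffun 'I_n -> color} => f (Ordinal han)) eab; rewrite !ffunE /= ltnn lt.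
  exact: col12n.
case: (ltngtP p1 p2) => // lt; first by case: (key _ _ h1 h2 e lt).
by case: (key _ _ h2 h1 (esym e) lt).
Qed.

Lemma cB_inj p1 p2 : p1.+2 <= n -> p2.+2 <= n -> cB p1 = cB p2 -> p1 = p2.
Proof.
move=> h1 h2 e.
have key : forall a b, a.+2 <= n -> b.+2 <= n -> cB a = cB b -> a < b -> False.
  move=> a b ha hb eab lt.
  have han : a < n by lia.
  have := congr1 (fun f : {ffun 'I_n -> color} => f (Ordinal han)) eab; rewrite !ffunE /= ltnn lt.
  have -> : (a == a.+1) = false by lia.
  exact: col12n.
case: (ltngtP p1 p2) => // lt; first by case: (key _ _ h1 h2 e lt).
by case: (key _ _ h2 h1 (esym e) lt).
Qed.

Lemma cAB p1 p2 : p2.+2 <= n -> cA p1 <> cB p2.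
Proof.
move=> h e.
have hx : p2 < n by lia.
have hy : p2.+1 < n by lia.
have e1 := congr1 (fun f : {ffun 'I_n -> color} => f (Ordinal hx)) e.
have e2 := congr1 (fun f : {ffun 'I_n -> color} => f (Ordinal hy)) e.
rewrite !ffunE /= ltnn in e1 e2.
have e1f : (p2 == p2.+1) = false by lia.
rewrite e1f in e1.
rewrite eqxx orbT in e2.
case: (ltnP p2 p1) e1 => a e1; first by apply: col12n; rewrite e1.
have b : (p2.+1 < p1) = false by lia.
by rewrite b in e2; apply: col12n.
Qed.


Lemma sum_split :
  \sum_(c : {ffun 'I_n -> color}) #|Pc c| =
  \sum_(p < n.+1) F p (n - p) + \sum_(p < n.-1) F p (n - p.+2).
Proof.
pose SA := [set cA (nat_of_ord p) | p in [set: 'I_n.+1]].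
pose SB := [set cB (nat_of_ord p) | p in [set: 'I_n.-1]].
rewrite (bigID [pred c | c \in SA]) /=.
rewrite [X in _ + X](bigID [pred c | c \in SB]) /=.
rewrite [X in _ + (_ + X)]big1 ?addn0; last first.
  move=> c /andP[nA nB]; apply/eqP; rewrite cards_eq0; apply/eqP/setP => P.
  rewrite in_set0 PcE; apply/negP => /classify [[p [hp e]] | [p [hp e]]].
    by move/negP: nA; apply; apply/imsetP; exists (Ordinal (hp : p < n.+1)).
  have hp' : p < n.-1 by lia.
  by move/negP: nB; apply; apply/imsetP; exists (Ordinal hp').
have -> : \sum_(c | (c \notin SA) && (c \in SB)) #|Pc c| = \sum_(c in SB) #|Pc c|.
  apply: eq_bigl => c; case: (boolP (c \in SB)) => hB; rewrite ?andbT ?andbF //.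
  apply/negP => /imsetP [p1 _ e1]; case/imsetP: hB => p2 _ e2.
  have := ltn_ord p2 => h2.
  by apply: (@cAB p1 p2) => //; [lia | rewrite -e1 -e2].
congr (_ + _).
  rewrite big_imset /=; last first.
    move=> a b _ _ e; apply: val_inj; apply: cA_inj e; have := ltn_ord a; have := ltn_ord b; lia.
  rewrite (eq_bigl xpredT) ?(@big_mkord _ _ _ n.+1) //; last by move=> x; rewrite inE.
  apply: eq_bigr => p _; apply: countA; have := ltn_ord p; lia.
rewrite big_imset /=; last first.
  move=> a b _ _ e; apply: val_inj; apply: cB_inj e; have := ltn_ord a; have := ltn_ord b; lia.
rewrite (eq_bigl xpredT); last by move=> x; rewrite inE.
apply: eq_bigr => p _; apply: countB; have := ltn_ord p; lia.
Qed.

End FinalS.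

Theorem mainTheorem3 (n : nat) (hn : 1 <= n) :
  #|avoiders n| =
    \sum_(0 <= j < n.+1) \sum_(1 <= i < n.+1) 'C(i - 1, j) * 'C(n - i, j) * j`!
  + \sum_(0 <= j < n.+1) \sum_(2 <= i < n.+1) (i - 1) * 'C(i - 2, j) * 'C(n - i, j) * j`!
  + \sum_(0 <= j < n.+1) \sum_(1 <= i < n) 'C(i - 1, j) * 'C(n - i - 1, j) * j`!
  + 1.
Proof. by rewrite card_sum sum_split algebra. Qed.
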